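(* Assume the three-space setting of the context. There exist $\epsilon_0>0$, $D'>0$ and $\lambda'>0$ such that for all $\epsilon\in I$ with $|\epsilon|\le\epsilon_0$, all $\omega\in\Omega'$ and all $n\in\mathbb N$: \[ \|\mathcal L^n_{\omega,\epsilon}h\|_{ss}\le D'e^{-\lambda' n}\|h\|_{ss}\ \ \text{for }h\in\mathcal B_{ss}^0,\qquad \|\mathcal L^n_{\omega,\epsilon}h\|_{s}\le D'e^{-\lambda' n}\|h\|_{s}\ \ \text{for }h\in\mathcal B_{s}^0. \]
   Context: $(\Omega,\mathcal F,\mathbb P)$ is a probability space, $\sigma$ an invertible measurable $\mathbb P$-preserving ergodic map. $\mathcal B_{ss}\subset\mathcal B_s\subset\mathcal B_w$ are Banach spaces with norms $\|\cdot\|_w\le\|\cdot\|_s$ on $\mathcal B_s$ and $\|\cdot\|_s\le\|\cdot\|_{ss}$ on $\mathcal B_{ss}$. $\psi$ is a nonzero bounded linear functional on $\mathcal B_s$ with a bounded extension to $\mathcal B_w$ (and restriction to $\mathcal B_{ss}$); $\mathcal B_{x}^0:=\{h\in\mathcal B_x:\psi(h)=0\}$ for $x\in\{ss,s,w\}$. $I\ni0$ is an interval; for $\epsilon\in I$, $\omega\in\Omega$, $\mathcal L_{\omega,\epsilon}$ is a bounded operator on each of the three spaces, and $\omega\mapsto\mathcal L_{\omega,\epsilon}h$ is measurable for each $h\in\mathcal B_s$ (resp. $h\in\mathcal B_{ss}$) and each $\epsilon$. $\mathcal L_\omega:=\mathcal L_{\omega,0}$, $\mathcal L^n_{\omega,\epsilon}:=\mathcal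 L_{\sigma^{n-1}\omega,\epsilon}\circ\cdots\circ\mathcal L_{\omega,\epsilon}$. There are $C,D,\lambda>0$, $\lambda_1\in(0,1)$ and a measurable $\sigma$-invariant $\Omega'\subset\Omega$, $\mathbb P(\Omega')=1$, such that for all $\epsilon\in I$, $\omega\in\Omega'$, $n\in\mathbb N$: $\|\mathcal L^n_\omega h\|_s\le De^{-\lambda n}\|h\|_s$ ($h\in\mathcal B_s^0$); $\|\mathcal L^n_\omega h\|_{ss}\le De^{-\lambda n}\|h\|_{ss}$ ($h\in\mathcal B_{ss}^0$); $\|\mathcal L^n_{\omega,\epsilon}h\|_s\le C\lambda_1^n\|h\|_s+C\|h\|_w$ ($h\in\mathcal B_s$); $\|\mathcal L^n_{\omega,\epsilon}h\|_{ss}\le C\lambda_1^n\|h\|_{ss}+C\|h\|_s$ ($h\in\mathcal B_{ss}$); $\|(\mathcal L_{\omega,\epsilon}-\mathcal L_\omega)h\|_w\le C|\epsilon|\|h\|_s$ ($h\in\mathcal B_s$); $\|(\mathcal L_{\omega,\epsilon}-\mathcal L_\omega)h\|_s\le C|\epsilon|\|h\|_{ss}$ ($h\in\mathcal B_{ss}$); $\|\mathcal L^n_{\omega,\epsilon}\|_{\mathcal B_w\to\mathcal B_w}\le C$; $\psi(\mathcal L_{\omega,\epsilon}h)=\psi(h)$ ($h\in\mathcal B_s$). *)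

(* Defs.v *)
From HB Require Import structures.
From mathcomp Require Import all_boot all_order all_algebra.
From mathcomp Require Import all_classical all_reals all_analysis.
Set Implicit Arguments. Unset Strict Implicit. Unset Printing Implicit Defensive.
Import Order.TTheory GRing.Theory Num.Theory.
Local Open Scope classical_set_scope.
Local Open Scope ring_scope.

Section Defs.
Variables (R : realType) (V : lmodType R).

Definition interval_of (I : set R) : Prop :=
  forall x y z, I x -> I z -> x <= y -> y <= z -> I y.

Definition subspace_of (S : set V) : Prop :=
  S 0 /\ forall (a : R) x y, S x -> S y -> S (a *: x + y).

Definition norm_on (S : set V) (n : V -> R) : Prop :=
  [/\ forall x, S x -> 0 <= n x,
      forall x, S x -> n x = 0 -> x = 0,
      forall (a : R) x, S x -> n (a *: x) = `|a| * n x
    & forall x y, S x -> S y -> n (x + y) <= n x + n y].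

Definition complete_on (S : set V) (n : V -> R) : Prop :=
  forall u : nat -> V, (forall k, S (u k)) ->
    (forall e, 0 < e -> exists N, forall k l, (N <= k)%N -> (N <= l)%N -> n (u k - u l) < e) ->
    exists x, S x /\ forall e, 0 < e -> exists N, forall k, (N <= k)%N -> n (u k - x) < e.

Definition banach_on (S : set V) (n : V -> R) : Prop :=
  [/\ subspace_of S, norm_on S n & complete_on S n].

Definition linear_map (f : V -> V) : Prop :=
  forall (a : R) x y, f (a *: x + y) = a *: f x + f y.

Definition linear_functional (f : V -> R) : Prop :=
  forall (a : R) x y, f (a *: x + y) = a * f x + f y.

Definition bounded_op_on (S : set V) (n : V -> R) (f : V -> V) : Prop :=
  (forall x, S x -> S (f x)) /\ exists K : R, forall x, S x -> n (f x) <= K * n x.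

End Defs.

(* iterated cocycle: Lit sigma L n w = L (sigma^(n-1) w) o ... o L w *)
Fixpoint Lit {T V : Type} (sigma : T -> T) (L : T -> V -> V) (n : nat) (w : T) (h : V)
  : V :=
  match n with
  | 0%N => h
  | m.+1 => Lit sigma L m (sigma w) (L w h)
  end.

(* measurability of w |-> F w with values in (S, n), w.r.t. the sigma-algebra
   generated by the open n-balls of S *)
Definition ball_measurable {d} {T : measurableType d} {R : realType} {V : lmodType R}
  (S : set V) (n : V -> R) (F : T -> V) : Prop :=
  forall c r, S c -> measurable [set w | n (F w - c) < r].

(* Main.v *)
Require Import Defs.
From HB Require Import structures.
From mathcomp Require Import all_boot all_order all_algebra all_classical all_reals all_analysis.
From mathcomp Require Import lra ring.
Import Order.TTheory GRing.Theory Num.Theory.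
Local Open Scope classical_set_scope.
Local Open Scope ring_scope.
Lemma geo_small (R : realType) (q e : R) : 0 <= q < 1 -> 0 < e ->
  exists N, forall n, (N <= n)%N -> q ^+ n < e.
Proof.
case/andP=> q0 q1 e0.
have hq : `|q| < 1 by rewrite ger0_norm.
have := cvgr_lt 0 (cvg_expr hq) e e0.
case=> N _ HN; exists N => n Hn; exact: HN.
Qed.

Lemma Lit_add (T V : Type) (s : T -> T) (F : T -> V -> V) n m w h :
  Lit s F (n + m) w h = Lit s F m (iter n s w) (Lit s F n w h).
Proof.
elim: n w h => [//|n IH] w h.
by rewrite addSn /= IH -iterSr.
Qed.

Lemma Lit_lin (R : realType) (V : lmodType R) (T : Type) (s : T -> T) (F : T -> V -> V)
  (HF : forall w, linear_map (F w)) n w x y :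
  Lit s F n w (x - y) = Lit s F n w x - Lit s F n w y.
Proof.
elim: n w x y => [//|n IH] w x y /=.
rewrite -IH; congr Lit.
have := HF w (-1) y x; rewrite !scaleN1r addrC => ->.
by rewrite addrC.
Qed.

Lemma Lit_stable (T V : Type) (s : T -> T) (F : T -> V -> V) (S : set V)
  (HS : forall w x, S x -> S (F w x)) n w x : S x -> S (Lit s F n w x).
Proof. by elim: n w x => [//|n IH] w x Sx /=; apply: IH; apply: HS. Qed.

Lemma iter_stable (T : Type) (s : T -> T) (Om : set T)
  (HO : forall w, Om w -> Om (s w)) n w : Om w -> Om (iter n s w).
Proof. by elim: n => [//|n IH] Ow /=; apply: HO; apply: IH. Qed.

Lemma Lit_psi (R : realType) (T V : Type) (s : T -> T) (F : T -> V -> V) (S : set V)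
  (Om : set T) (psi : V -> R)
  (HO : forall w, Om w -> Om (s w))
  (HS : forall w x, S x -> S (F w x))
  (Hp : forall w x, Om w -> S x -> psi (F w x) = psi x) n w x :
  Om w -> S x -> psi (Lit s F n w x) = psi x.
Proof.
elim: n w x => [//|n IH] w x Ow Sx /=.
by rewrite IH ?Hp //; [apply: HO | apply: HS].
Qed.

Lemma tele (R : realType) (V : lmodType R) (T : Type) (a b : V -> R) (S W : set V)
  (F G : T -> V -> V) (s : T -> T) (Om : set T) (K dl : R)
  (K0 : 0 <= K) (dl0 : 0 <= dl)
  (HO : forall w, Om w -> Om (s w))
  (HF : forall w, linear_map (F w))
  (HSF : forall w x, S x -> S (F w x)) (HSG : forall w x, S x -> S (G w x))
  (HWF : forall w x, W x -> W (F w x)) (HSW : S `<=` W)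
  (HWB : forall x y, W x -> W y -> W (x - y))
  (Hb0 : b 0 = 0)
  (Htri : forall x y, W x -> W y -> b (x + y) <= b x + b y)
  (HwF : forall w n x, Om w -> W x -> b (Lit s F n w x) <= K * b x)
  (Hpert : forall w x, Om w -> S x -> b (F w x - G w x) <= dl * a x) :
  forall n w y M, Om w -> S y -> (forall k, a (Lit s G k w y) <= M) ->
   b (Lit s F n w y - Lit s G n w y) <= n%:R * (K * dl * M).
Proof.
elim=> [|n IH] w y M Ow Sy HM.
  by rewrite /= subrr Hb0 mul0r.
rewrite /=.
set u := Lit s F n (s w) (F w y).
set v := Lit s F n (s w) (G w y).
set g := Lit s G n (s w) (G w y).
have -> : u - g = (u - v) + (v - g) by rewrite addrA subrK.
have Wu : W u by apply: HSW; apply: Lit_stable => //; apply: HSF.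
have Wv : W v by apply: HSW; apply: Lit_stable => //; apply: HSG.
have Wg : W g by apply: HSW; apply: Lit_stable => //; apply: HSG.
apply: le_trans (Htri _ _ (HWB _ _ Wu Wv) (HWB _ _ Wv Wg)) _.
rewrite -addn1 natrD mulrDl mul1r addrC.
apply: lerD; last first.
- rewrite /u /v -(@Lit_lin _ _ _ s F HF).
  apply: le_trans (HwF _ _ _ (HO _ Ow) (HWB _ _ (HSW _ (HSF _ _ Sy)) (HSW _ (HSG _ _ Sy)))) _.
  rewrite -mulrA; apply: ler_wpM2l => //.
  apply: le_trans (Hpert _ _ Ow Sy) _.
  apply: ler_wpM2l => //; exact: (HM 0%N).
- apply: IH => //; [exact: HO | exact: HSG | move=> k; exact: (HM k.+1)].
Qed.
Lemma contract (R : realType) (V : lmodType R) (T : Type) (a b : V -> R) (S W : set V)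
  (F G : T -> V -> V) (s : T -> T) (Om : set T) (psi : V -> R) (K dl Dd lam lam1 : R)
  (K0 : 0 <= K) (dl0 : 0 <= dl) (l10 : 0 <= lam1)
  (HO : forall w, Om w -> Om (s w))
  (HF : forall w, linear_map (F w))
  (HSF : forall w x, S x -> S (F w x)) (HSG : forall w x, S x -> S (G w x))
  (HWF : forall w x, W x -> W (F w x)) (HSW : S `<=` W)
  (HWB : forall x y, W x -> W y -> W (x - y))
  (Hb0 : b 0 = 0)
  (Htri : forall x y, W x -> W y -> b (x + y) <= b x + b y)
  (HwF : forall w n x, Om w -> W x -> b (Lit s F n w x) <= K * b x)
  (Hpert : forall w x, Om w -> S x -> b (F w x - G w x) <= dl * a x)
  (HLY : forall w n x, Om w -> (0 < n)%N -> S x ->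
      a (Lit s F n w x) <= K * lam1 ^+ n * a x + K * b x)
  (HsF : forall w n x, Om w -> S x -> a (Lit s F n w x) <= K * a x)
  (HsG : forall w n x, Om w -> S x -> a (Lit s G n w x) <= K * a x)
  (Hdec : forall w n x, Om w -> (0 < n)%N -> S x -> psi x = 0 ->
      b (Lit s G n w x) <= Dd * expR (- lam * n%:R) * a x)
  N w x : Om w -> (0 < N)%N -> S x -> psi x = 0 ->
  a (Lit s F (N + N) w x) <=
    (K * lam1 ^+ N * K + K * (Dd * expR (- lam * N%:R) + N%:R * (K * dl * K))) * a x.
Proof.
move=> Ow HN Sx px.
rewrite Lit_add.
set y := Lit s F N w x.
have Sy : S y by apply: Lit_stable.
have Ow' : Om (iter N s w) by apply: iter_stable.
apply: le_trans (HLY _ _ _ Ow' HN Sy) _.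
rewrite mulrDl; apply: lerD.
  rewrite -!mulrA; apply: ler_wpM2l => //; apply: ler_wpM2l; first exact: exprn_ge0.
  exact: HsF.
rewrite -mulrA; apply: ler_wpM2l => //.
set g := Lit s G N w x.
have Sg : S g by apply: Lit_stable.
have -> : y = g + (y - g) by rewrite addrC subrK.
apply: le_trans (Htri _ _ (HSW _ Sg) (HWB _ _ (HSW _ Sy) (HSW _ Sg))) _.
rewrite mulrDl; apply: lerD; first exact: Hdec.
have := @tele R V T a b S W F G s Om K dl K0 dl0 HO HF HSF HSG HWF HSW HWB Hb0 Htri HwF Hpert
  N w x (K * a x) Ow Sx (fun k => HsG w k x Ow Sx).
by rewrite !mulrA.
Qed.

Lemma iterate (R : realType) (V : lmodType R) (T : Type) (a : V -> R) (S : set V)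
  (F : T -> V -> V) (s : T -> T) (Om : set T) (psi : V -> R) (K q : R) (P : nat)
  (q0 : 0 <= q) (K0 : 0 <= K)
  (HO : forall w, Om w -> Om (s w))
  (HSF : forall w x, S x -> S (F w x))
  (Hp : forall w x, Om w -> S x -> psi (F w x) = psi x)
  (Ha0 : forall x, S x -> 0 <= a x)
  (HsF : forall w n x, Om w -> S x -> a (Lit s F n w x) <= K * a x)
  (Hc : forall w x, Om w -> S x -> psi x = 0 -> a (Lit s F P w x) <= q * a x) :
  forall n w x, Om w -> S x -> psi x = 0 -> a (Lit s F n w x) <= K * q ^+ (n %/ P) * a x.
Proof.
have Hk : forall k w x, Om w -> S x -> psi x = 0 -> a (Lit s F (k * P) w x) <= q ^+ k * a x.
  elim=> [|k IH] w x Ow Sx px; first by rewrite mul0n expr0 mul1r.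
  rewrite mulSn Lit_add.
  apply: le_trans (IH _ _ _ _ _) _.
  - exact: iter_stable.
  - exact: Lit_stable.
  - by rewrite (@Lit_psi _ _ _ s F S Om psi HO HSF Hp).
  rewrite exprSr -mulrA; apply: ler_wpM2l; first exact: exprn_ge0.
  exact: Hc.
move=> n w x Ow Sx px.
rewrite {1}(divn_eq n P) Lit_add.
apply: le_trans (HsF _ _ _ _ _) _.
- exact: iter_stable.
- exact: Lit_stable.
rewrite -mulrA; apply: ler_wpM2l.
  by [].
by apply: Hk.
Qed.

Lemma expo (R : realType) (P n : nat) : (0 < P)%N ->
  expR (-1 : R) ^+ (n %/ P) <= expR 1 * expR (- P%:R^-1 * n%:R).
Proof.
move=> HP; rewrite -expRM_natr -expRD ler_expR.
set k := (n %/ P)%N.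
have h1 : (n < k.+1 * P)%N by apply: ltn_ceil.
have h2 : (n%:R : R) <= k.+1%:R * P%:R by rewrite -natrM ler_nat ltnW.
have P0 : (0 : R) < P%:R by rewrite ltr0n.
have h3 : P%:R^-1 * n%:R <= k.+1%:R :> R by rewrite mulrC ler_pdivrMr.
rewrite -natr1 in h3; lra.
Qed.

Lemma generic (R : realType) (V : lmodType R) (T : Type) (a b : V -> R) (S W : set V)
  (F G : T -> V -> V) (s : T -> T) (Om : set T) (psi : V -> R) (K dl Dd lam lam1 : R)
  (K0 : 0 <= K) (dl0 : 0 <= dl) (l10 : 0 <= lam1)
  (HO : forall w, Om w -> Om (s w))
  (HF : forall w, linear_map (F w))
  (HSF : forall w x, S x -> S (F w x)) (HSG : forall w x, S x -> S (G w x))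
  (HWF : forall w x, W x -> W (F w x)) (HSW : S `<=` W)
  (HWB : forall x y, W x -> W y -> W (x - y))
  (Hb0 : b 0 = 0)
  (Htri : forall x y, W x -> W y -> b (x + y) <= b x + b y)
  (HwF : forall w n x, Om w -> W x -> b (Lit s F n w x) <= K * b x)
  (Hpert : forall w x, Om w -> S x -> b (F w x - G w x) <= dl * a x)
  (HLY : forall w n x, Om w -> (0 < n)%N -> S x ->
      a (Lit s F n w x) <= K * lam1 ^+ n * a x + K * b x)
  (HsF : forall w n x, Om w -> S x -> a (Lit s F n w x) <= K * a x)
  (HsG : forall w n x, Om w -> S x -> a (Lit s G n w x) <= K * a x)
  (Hdec : forall w n x, Om w -> (0 < n)%N -> S x -> psi x = 0 ->
      b (Lit s G n w x) <= Dd * expR (- lam * n%:R) * a x)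
  (Hp : forall w x, Om w -> S x -> psi (F w x) = psi x)
  (Ha0 : forall x, S x -> 0 <= a x)
  (N : nat) (HN : (0 < N)%N)
  (Hsmall : K * lam1 ^+ N * K + K * (Dd * expR (- lam * N%:R) + N%:R * (K * dl * K))
     <= expR (-1)) :
  forall n w x, Om w -> S x -> psi x = 0 ->
    a (Lit s F n w x) <= K * expR 1 * expR (- (N + N)%:R^-1 * n%:R) * a x.
Proof.
have Hc : forall w x, Om w -> S x -> psi x = 0 ->
    a (Lit s F (N + N) w x) <= expR (-1) * a x.
  move=> w x Ow Sx px.
  apply: le_trans (@contract R V T a b S W F G s Om psi K dl Dd lam lam1 K0 dl0 l10
    HO HF HSF HSG HWF HSW HWB Hb0 Htri HwF Hpert HLY HsF HsG Hdec N w x Ow HN Sx px) _.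
  by apply: ler_wpM2r => //; apply: Ha0.
move=> n w x Ow Sx px.
apply: le_trans (@iterate R V T a S F s Om psi K (expR (-1)) (N + N)
   (ltW (expR_gt0 _)) K0 HO HSF Hp Ha0 HsF Hc n w x Ow Sx px) _.
rewrite -(mulrA K (expR 1)); apply: ler_wpM2r; first exact: Ha0.
apply: ler_wpM2l => //; apply: expo.
by rewrite addn_gt0 HN.
Qed.

Lemma bnd (R : realType) (C l a b c : R) : 0 < C -> 0 <= l <= 1 -> 0 <= b <= a ->
  c <= C * l * a + C * b -> c <= (2 * C + 1) * a.
Proof.
move=> C0 /andP[l0 l1] /andP[b0 ba] h.
have a0 : 0 <= a by apply: le_trans ba.
have h1 : C * l * a <= C * a.
  rewrite -mulrA ler_pM2l //.
  have : 0 <= (1 - l) * a by apply: mulr_ge0; lra.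
  by rewrite mulrBl mul1r subr_ge0.
have h2 : C * b <= C * a by nra.
have -> : (2 * C + 1) * a = C * a + C * a + a by ring.
move: h h1 h2; set u := C * l * a; set v := C * b; set t := C * a; lra.
Qed.

Lemma bndLY (R : realType) (C l a b c : R) : 0 < C -> 0 <= l -> 0 <= a -> 0 <= b ->
  c <= C * l * a + C * b -> c <= (2 * C + 1) * l * a + (2 * C + 1) * b.
Proof.
move=> C0 l0 a0 b0 h.
have la : 0 <= l * a by apply: mulr_ge0.
have h1 : C * l * a <= (2 * C + 1) * l * a.
  by rewrite -!mulrA ler_wpM2r //; lra.
have h2 : C * b <= (2 * C + 1) * b by rewrite ler_wpM2r //; lra.
lra.
Qed.

Lemma bnd0 (R : realType) (C a : R) : 0 < C -> 0 <= a -> a <= (2 * C + 1) * a.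
Proof. move=> C0 a0; nra. Qed.

Theorem lemma3p6
  (d : measure_display) (T : measurableType d) (R : realType)
  (P : probability T R) (sigma : T -> T)
  (* sigma invertible, measurable, with measurable inverse *)
  (sigma_inv : T -> T) (Hsc1 : cancel sigma sigma_inv) (Hsc2 : cancel sigma_inv sigma)
  (Hsm : measurable_fun setT sigma) (Hsim : measurable_fun setT sigma_inv)
  (* P-preserving *)
  (Hpres : forall A, measurable A -> P (sigma @^-1` A) = P A)
  (* ergodic *)
  (Herg : forall A, measurable A -> sigma @^-1` A = A -> P A = 0%E \/ P A = 1%E)
  (* the three Banach spaces B_ss ⊂ B_s ⊂ B_w = V *)
  (V : lmodType R) (Bs Bss : set V) (nw ns nss : V -> R)
  (Hw : banach_on setT nw) (Hs : banach_on Bs ns) (Hss : banach_on Bss nss)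
  (HsubSS : Bss `<=` Bs)
  (Hnws : forall h, Bs h -> nw h <= ns h)
  (Hnsss : forall h, Bss h -> ns h <= nss h)
  (* psi *)
  (psi : V -> R) (Hpsi_lin : linear_functional psi)
  (Hpsi_nz : exists h, Bs h /\ psi h <> 0)
  (Hpsi_bs : exists c : R, forall h, Bs h -> `|psi h| <= c * ns h)
  (Hpsi_bw : exists c : R, forall h, `|psi h| <= c * nw h)
  (* the interval of parameters *)
  (I : set R) (HI : interval_of I) (HI0 : I 0)
  (* the operators L_{w,eps} *)
  (L : T -> R -> V -> V)
  (HLlin : forall w eps, I eps -> linear_map (L w eps))
  (HLw : forall w eps, I eps -> bounded_op_on setT nw (L w eps))
  (HLs : forall w eps, I eps -> bounded_op_on Bs ns (L w eps))
  (HLss : forall w eps, I eps -> bounded_op_on Bss nss (L w eps))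
  (HLmeas_s : forall eps h, I eps -> Bs h -> ball_measurable Bs ns (fun w => L w eps h))
  (HLmeas_ss : forall eps h, I eps -> Bss h -> ball_measurable Bss nss (fun w => L w eps h))
  (* constants and the full-measure invariant set Omega' *)
  (C D lam lam1 : R) (HC : 0 < C) (HD : 0 < D) (Hlam : 0 < lam)
  (Hlam1 : 0 < lam1 < 1)
  (Om' : set T) (HOm_meas : measurable Om') (HOm_inv : sigma @^-1` Om' = Om')
  (HOm_full : P Om' = 1%E)
  (H1 : forall w n h, Om' w -> (0 < n)%N -> Bs h -> psi h = 0 ->
     ns (Lit sigma (fun w => L w 0) n w h) <= D * expR (- lam * n%:R) * ns h)
  (H2 : forall w n h, Om' w -> (0 < n)%N -> Bss h -> psi h = 0 ->
     nss (Lit sigma (fun w => L w 0) n w h) <= D * expR (- lam * n%:R) * nss h)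
  (H3 : forall eps w n h, I eps -> Om' w -> (0 < n)%N -> Bs h ->
     ns (Lit sigma (fun w => L w eps) n w h) <= C * lam1 ^+ n * ns h + C * nw h)
  (H4 : forall eps w n h, I eps -> Om' w -> (0 < n)%N -> Bss h ->
     nss (Lit sigma (fun w => L w eps) n w h) <= C * lam1 ^+ n * nss h + C * ns h)
  (H5 : forall eps w h, I eps -> Om' w -> Bs h ->
     nw (L w eps h - L w 0 h) <= C * `|eps| * ns h)
  (H6 : forall eps w h, I eps -> Om' w -> Bss h ->
     ns (L w eps h - L w 0 h) <= C * `|eps| * nss h)
  (H7 : forall eps w n h, I eps -> Om' w -> (0 < n)%N ->
     nw (Lit sigma (fun w => L w eps) n w h) <= C * nw h)
  (H8 : forall eps w h, I eps -> Om' w -> Bs h -> psi (L w eps h) = psi h) :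
  exists eps0 D' lam' : R, [/\ 0 < eps0, 0 < D', 0 < lam' &
    forall eps w n, I eps -> `|eps| <= eps0 -> Om' w ->
      (forall h, Bss h -> psi h = 0 ->
         nss (Lit sigma (fun w => L w eps) n w h) <= D' * expR (- lam' * n%:R) * nss h) /\
      (forall h, Bs h -> psi h = 0 ->
         ns (Lit sigma (fun w => L w eps) n w h) <= D' * expR (- lam' * n%:R) * ns h)].
Proof.
have [[Bs0 BsL] [ns0 _ nssc nstri] _] := Hs.
have [_ [nw0 _ nwsc nwtri] _] := Hw.
have [_ [nss0 _ _ _] _] := Hss.
have nw00 : nw 0 = 0.
  by have := nwsc 0 0 Logic.I; rewrite scale0r normr0 mul0r.
have ns00 : ns 0 = 0.
  by have := nssc 0 0 Bs0; rewrite scale0r normr0 mul0r.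
have HO : forall w, Om' w -> Om' (sigma w).
  by move=> w Ow; have : (sigma @^-1` Om') w by rewrite HOm_inv.
have l10 : 0 <= lam1 by case/andP: Hlam1 => /ltW.
have l11 : lam1 <= 1 by case/andP: Hlam1 => _ /ltW.
have lp n : 0 <= lam1 ^+ n <= 1 by rewrite exprn_ge0 ?exprn_ile1.
set K := 2 * C + 1.
have K0 : 0 < K by rewrite /K; lra.
set e := expR (-1 : R).
have e0 : 0 < e by apply: expR_gt0.
have [N1 HN1] : exists N, forall n, (N <= n)%N -> lam1 ^+ n < e / (3 * K * K).
  apply: geo_small; first by rewrite l10; case/andP: Hlam1.
  by apply: divr_gt0 => //; rewrite !mulr_gt0.
have [N2 HN2] : exists N, forall n, (N <= n)%N ->
    expR (- lam) ^+ n < e / (3 * K * D).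
  apply: geo_small; first by rewrite ltW ?expR_gt0 // expR_lt1 oppr_lt0.
  by apply: divr_gt0 => //; rewrite !mulr_gt0.
set N := (maxn N1 N2).+1.
have HN : (0 < N)%N by [].
have N0 : (0 : R) < N%:R by rewrite ltr0n.
set eps0 := e / (3 * (N%:R * K * K * K * C)).
have eps00 : 0 < eps0 by apply: divr_gt0 => //; rewrite !mulr_gt0.
exists eps0, (K * expR 1), (N + N)%:R^-1.
split => //.
- by apply: mulr_gt0 => //; apply: expR_gt0.
- by rewrite invr_gt0 ltr0n addn_gt0.
move=> eps w n Ieps Heps Ow.
set dl := C * `|eps|.
have dl0 : 0 <= dl by apply: mulr_ge0; [apply: ltW | apply: normr_ge0].
have Hsmall : K * lam1 ^+ N * K + K * (D * expR (- lam * N%:R) + N%:R * (K * dl * K))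
     <= e.
  have h1 : lam1 ^+ N * (3 * K * K) < e.
    by rewrite -ltr_pdivlMr ?mulr_gt0 //; apply: HN1; rewrite leqW // leq_maxl.
  have h2 : expR (- lam) ^+ N * (3 * K * D) < e.
    by rewrite -ltr_pdivlMr ?mulr_gt0 //; apply: HN2; rewrite leqW // leq_maxr.
  rewrite expRM_natr.
  have h3 : dl * (3 * (N%:R * K * K * K)) <= e.
    have : dl <= C * eps0 by rewrite /dl ler_pM2l.
    rewrite /eps0 => hd.
    have -> : e = C * (e / (3 * (N%:R * K * K * K * C))) * (3 * (N%:R * K * K * K)).
      by field; rewrite ?gt_eqF ?lt0r_neq0 //; apply/andP; split; rewrite ?gt_eqF ?mulr_gt0 //.
    by rewrite ler_wpM2r // ltW // !mulr_gt0.
  move: h1 h2 h3.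
  set x1 := lam1 ^+ N; set x2 := expR (-lam) ^+ N.
  have -> : K * x1 * K + K * (D * x2 + N%:R * (K * dl * K)) =
    (x1 * (3 * K * K) + x2 * (3 * K * D) + dl * (3 * (N%:R * K * K * K))) / 3.
    by field.
  move=> h1 h2 h3; rewrite ler_pdivrMr //; lra.
split.
-
  move=> h Bh ph.
  apply: (@generic R V T nss ns Bss Bs (fun w => L w eps) (fun w => L w 0) sigma Om' psi
    K dl D lam lam1 (ltW K0) dl0 l10 HO) => //.
  + by move=> w'; apply: HLlin.
  + by move=> w' x; apply: (HLss w' eps Ieps).1.
  + by move=> w' x; apply: (HLss w' 0 HI0).1.
  + by move=> w' x; apply: (HLs w' eps Ieps).1.
  + by move=> x y Bx By; have := BsL (-1) y x By Bx; rewrite scaleN1r addrC.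
  + move=> w' [|m] x Ow' Bx; first by rewrite /=; apply: bnd0 => //; apply: ns0.
    apply: (@bnd R C (lam1 ^+ m.+1) _ (nw x)) => //; first by apply/andP; split; [apply: nw0 | apply: Hnws].
    exact: H3.
  + by move=> w' x Ow' Bx; apply: H6.
  + move=> w' m x Ow' m0 Bx; apply: bndLY => //; [exact: exprn_ge0 | exact: nss0 |
      exact: ns0 (HsubSS _ Bx) | exact: H4].
  + move=> w' [|m] x Ow' Bx; first by rewrite /=; apply: bnd0 => //; apply: nss0.
    apply: (@bnd R C (lam1 ^+ m.+1) _ (ns x)) => //; first by apply/andP; split; [apply: ns0; apply: HsubSS | apply: Hnsss].
    exact: H4.
  + move=> w' [|m] x Ow' Bx; first by rewrite /=; apply: bnd0 => //; apply: nss0.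
    apply: (@bnd R C (lam1 ^+ m.+1) _ (ns x)) => //; first by apply/andP; split; [apply: ns0; apply: HsubSS | apply: Hnsss].
    exact: H4.
  + move=> w' m x Ow' m0 Bx px.
    apply: le_trans (H1 _ _ _ Ow' m0 (HsubSS _ Bx) px) _.
    apply: ler_wpM2l; last exact: Hnsss.
    by rewrite mulr_ge0 ?ltW ?expR_gt0.
  + by move=> w' x Ow' Bx; apply: H8 => //; apply: HsubSS.
-
  move=> h Bh ph.
  apply: (@generic R V T ns nw Bs setT (fun w => L w eps) (fun w => L w 0) sigma Om' psi
    K dl D lam lam1 (ltW K0) dl0 l10 HO) => //.
  + by move=> w'; apply: HLlin.
  + by move=> w' x; apply: (HLs w' eps Ieps).1.
  + by move=> w' x; apply: (HLs w' 0 HI0).1.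
  + move=> w' [|m] x Ow' _; first by rewrite /=; apply: bnd0 => //; apply: nw0.
    apply: le_trans (H7 _ _ _ _ Ieps Ow' _) _ => //.
    by apply: ler_wpM2r; [exact: nw0 | rewrite /K; lra].
  + by move=> w' x Ow' Bx; apply: H5.
  + move=> w' m x Ow' m0 Bx; apply: bndLY => //; [exact: exprn_ge0 | exact: ns0 |
      exact: nw0 | exact: H3].
  + move=> w' [|m] x Ow' Bx; first by rewrite /=; apply: bnd0 => //; apply: ns0.
    apply: (@bnd R C (lam1 ^+ m.+1) _ (nw x)) => //; first by apply/andP; split; [apply: nw0 | apply: Hnws].
    exact: H3.
  + move=> w' [|m] x Ow' Bx; first by rewrite /=; apply: bnd0 => //; apply: ns0.
    apply: (@bnd R C (lam1 ^+ m.+1) _ (nw x)) => //; first by apply/andP; split; [apply: nw0 | apply: Hnws].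
    exact: H3.
  + move=> w' m x Ow' m0 Bx px.
    apply: le_trans _ (H1 _ _ _ Ow' m0 Bx px).
    apply: Hnws; apply: Lit_stable => // w'' y; apply: (HLs w'' 0 HI0).1.
  + by move=> w' x Ow' Bx; apply: H8.
Qed.
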